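(* Let $ABC$ be a triangle with incenter $I$, let $P$ be a point in its plane, and let $A_PB_PC_P$ be the pedal triangle of $P$ with respect to $ABC$. Let $A', B', C'$ be the feet of the perpendiculars from $P$ to $AI, BI, CI$, and let $H'$ be the orthocenter of $A'B'C'$. For $x>0$ let $A_1, B_1, C_1$ be the points on the rays $A_PC, B_PA, C_PB$, and $A_2, B_2, C_2$ the points on the rays $A_PB, B_PC, C_PA$, all at distance $x$ from $A_P, B_P, C_P$ respectively (i.e. $A_PA_i = B_PB_i = C_PC_i = x$ for $i=1,2$). Let $Q_1 = O_{A_1B_1C_1}(A'B'C')$ and $Q_2 = O_{A_2B_2C_2}(A'B'C')$. Then $H'Q_1 = H'Q_2$.
   Context: For orthologic triangles $XYZ$ and $DEF$ (meaning the perpendiculars from $X, Y, Z$ to $EF, FD, DE$ concur), $O_{XYZ}(DEF)$ denotes the common point of the perpendiculars from $X, Y, Z$ to $EF, FD, DE$ respectively. Thus $Q_i$ is the common point of the perpendiculars from $A_i, B_i, C_i$ to $B'C', C'A', A'B'$ (these are concurrent). The pedal triangle $A_PB_PC_P$ consists of the feet of the perpendiculars from $P$ to $BC, CA, AB$. *)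

(* Defs.v *)
From mathcomp Require Import all_boot all_order all_algebra.
Set Implicit Arguments. Unset Strict Implicit. Unset Printing Implicit Defensive.
Import Order.TTheory GRing.Theory Num.Theory.
Local Open Scope ring_scope.

Section Geo.
Variable R : rcfType.
Definition point := (R * R)%type.

Definition padd (U V : point) : point := (U.1 + V.1, U.2 + V.2).
Definition psub (U V : point) : point := (U.1 - V.1, U.2 - V.2).
Definition pscale (t : R) (U : point) : point := (t * U.1, t * U.2).
Definition dot (U V : point) : R := U.1 * V.1 + U.2 * V.2.
Definition dist2 (U V : point) : R := dot (psub U V) (psub U V).
Definition dist (U V : point) : R := Num.sqrt (dist2 U V).

Definition collinear (A B C : point) : bool :=
  (B.1 - A.1) * (C.2 - A.2) - (B.2 - A.2) * (C.1 - A.1) == 0.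

(* foot of the perpendicular from P to the line UV (U <> V) *)
Definition foot (P U V : point) : point :=
  padd U (pscale (dot (psub P U) (psub V U) / dist2 V U) (psub V U)).

Definition incenter (A B C : point) : point :=
  let a := dist B C in let b := dist C A in let c := dist A B in
  pscale (a + b + c)^-1 (padd (pscale a A) (padd (pscale b B) (pscale c C))).

Definition is_orthocenter (H X Y Z : point) : Prop :=
  [/\ dot (psub H X) (psub Y Z) = 0,
      dot (psub H Y) (psub Z X) = 0 &
      dot (psub H Z) (psub X Y) = 0].

(* Q = O_{XYZ}(DEF): Q lies on the perpendiculars from X, Y, Z to EF, FD, DE *)
Definition is_orthologic_center (X Y Z D E F Q : point) : Prop :=
  [/\ dot (psub Q X) (psub E F) = 0,
      dot (psub Q Y) (psub F D) = 0 &
      dot (psub Q Z) (psub D E) = 0].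

Definition on_ray_at (O D : point) (x : R) (X : point) : Prop :=
  (exists2 t : R, 0 < t & X = padd O (pscale t (psub D O))) /\ dist O X = x.
End Geo.

(* Main.v *)
Require Import Defs.
From mathcomp Require Import all_boot all_order all_algebra.
From mathcomp Require Import complex.
From mathcomp Require Import ring lra.
Import Order.TTheory GRing.Theory Num.Theory.
Local Open Scope ring_scope.
Set Implicit Arguments. Unset Strict Implicit. Unset Printing Implicit Defensive.
Section S1.
Variable R : rcfType.
Local Notation pt := (point R).
Definition cross (U V : pt) : R := U.1 * V.2 - U.2 * V.1.

Lemma sign_cases (s : R) : s ^+ 2 = 1 -> s = 1 \/ s = -1.
Proof.
move=> h. have: (s - 1) * (s + 1) = 0.
  by transitivity (s ^+ 2 - 1); [ring | rewrite h subrr].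
move/eqP; rewrite mulf_eq0 => /orP [/eqP h1|/eqP h1]; [left|right].
  by rewrite -(subrK 1 s) h1 add0r.
by rewrite -(addrK 1 s) h1 sub0r.
Qed.

Lemma eps_exists (sa sb sc l1 l2 l3 : R) :
  sa ^+ 2 = 1 -> sb ^+ 2 = 1 -> sc ^+ 2 = 1 ->
  l1 + l2 + l3 = 0 -> sa * l1 + sb * l2 + sc * l3 = 0 ->
  exists e : R, [/\ e ^+ 2 = 1, sa * l1 = e * l1 & sb * l2 = e * l2].
Proof.
move=> /sign_cases [->|->] /sign_cases [->|->] /sign_cases [->|->] h1 h2.
- by exists 1; split => //; rewrite expr1n.
- by exists 1; split => //; rewrite ?expr1n //; lra.
- by exists 1; split; rewrite ?expr1n //; lra.
- by exists (-1); split; rewrite ?sqrrN ?expr1n //; lra.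
- by exists 1; split; rewrite ?expr1n //; lra.
- by exists (-1); split; rewrite ?sqrrN ?expr1n //; lra.
- by exists (-1); split; rewrite ?sqrrN ?expr1n //; lra.
- by exists (-1); split; rewrite ?sqrrN ?expr1n //; lra.
Qed.

Lemma lagrange (v n1 n2 : pt) :
  cross n1 n2 ^+ 2 * dot v v =
  (dot v n1) ^+ 2 * dot n2 n2 - 2 * dot v n1 * dot v n2 * dot n1 n2
  + (dot v n2) ^+ 2 * dot n1 n1.
Proof. rewrite /cross /dot; ring. Qed.

Lemma final_gen (H Q1 Q2 A' B' C' X Y Z ua ub uc : pt) (x sa sb sc ta tb tc : R) :
  cross (psub B' C') (psub C' A') != 0 -> 0 < x ->
  sa ^+ 2 = 1 -> sb ^+ 2 = 1 -> sc ^+ 2 = 1 ->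
  ta ^+ 2 = 1 -> tb ^+ 2 = 1 -> tc ^+ 2 = 1 ->
  is_orthocenter H A' B' C' ->
  is_orthologic_center (padd X (pscale (x * sa) ua)) (padd Y (pscale (x * sb) ub))
     (padd Z (pscale (x * sc) uc)) A' B' C' Q1 ->
  is_orthologic_center (padd X (pscale (x * ta) ua)) (padd Y (pscale (x * tb) ub))
     (padd Z (pscale (x * tc) uc)) A' B' C' Q2 ->
  dot (psub X A') (psub B' C') + dot (psub Y B') (psub C' A')
    + dot (psub Z C') (psub A' B') = 0 ->
  dot ua (psub B' C') + dot ub (psub C' A') + dot uc (psub A' B') = 0 ->
  (let n1 := psub B' C' in let n2 := psub C' A' in
   let d1 := dot (psub X A') n1 in let d2 := dot (psub Y B') n2 in
   let l1 := dot ua n1 in let l2 := dot ub n2 in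
   d1 * l1 * dot n2 n2 - (d1 * l2 + d2 * l1) * dot n1 n2 + d2 * l2 * dot n1 n1 = 0) ->
  dist H Q1 = dist H Q2.
Proof.
move=> hD hx hsa hsb hsc hta htb htc [h1 h2 h3] [q1 q2 q3] [r1 r2 r3] E1 E2 E3.
set n1 := psub B' C' in hD E1 E2 E3 *.
set n2 := psub C' A' in hD E1 E2 E3 *.
set n3 := psub A' B' in E1 E2.
set d1 := dot (psub X A') n1 in E1 E3.
set d2 := dot (psub Y B') n2 in E1 E3.
set d3 := dot (psub Z C') n3 in E1.
set l1 := dot ua n1 in E2 E3.
set l2 := dot ub n2 in E2 E3.
set l3 := dot uc n3 in E2.
have gen : forall (Q : pt) (s1 s2 s3 : R),
   is_orthologic_center (padd X (pscale (x * s1) ua)) (padd Y (pscale (x * s2) ub))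
     (padd Z (pscale (x * s3) uc)) A' B' C' Q ->
   s1 ^+ 2 = 1 -> s2 ^+ 2 = 1 -> s3 ^+ 2 = 1 ->
   exists e : R, e ^+ 2 = 1 /\
   dot (psub Q H) n1 = d1 + x * e * l1 /\ dot (psub Q H) n2 = d2 + x * e * l2.
  move=> Q s1 s2 s3 [o1 o2 o3] e1 e2 e3.
  have k1 : dot (psub Q H) n1 = d1 + x * s1 * l1.
    apply/eqP; rewrite -subr_eq0; apply/eqP.
    rewrite -[RHS](subr0 0) -{1}o1 -h1 /n1 /d1 /l1.
    rewrite /dot /psub /padd /pscale /=; ring.
  have k2 : dot (psub Q H) n2 = d2 + x * s2 * l2.
    apply/eqP; rewrite -subr_eq0; apply/eqP.
    rewrite -[RHS](subr0 0) -{1}o2 -h2 /n2 /d2 /l2.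
    rewrite /dot /psub /padd /pscale /=; ring.
  have k3 : dot (psub Q H) n3 = d3 + x * s3 * l3.
    apply/eqP; rewrite -subr_eq0; apply/eqP.
    rewrite -[RHS](subr0 0) -{1}o3 -h3 /n3 /d3 /l3.
    rewrite /dot /psub /padd /pscale /=; ring.
  have ksum : dot (psub Q H) n1 + dot (psub Q H) n2 + dot (psub Q H) n3 = 0.
    by rewrite /n1 /n2 /n3 /dot /psub /=; ring.
  have hs : s1 * l1 + s2 * l2 + s3 * l3 = 0.
    have : x * (s1 * l1 + s2 * l2 + s3 * l3) = 0.
      rewrite -ksum k1 k2 k3; move: E1; rewrite -/d1 -/d2 -/d3 => E1.
      transitivity (x * (s1 * l1 + s2 * l2 + s3 * l3) + (d1 + d2 + d3)); last by ring.
      by rewrite E1 addr0.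
    by move/eqP; rewrite mulf_eq0 (gt_eqF hx) /= => /eqP.
  have [e [he ea eb]] := eps_exists e1 e2 e3 E2 hs.
  exists e; split => //; split.
    by rewrite k1 -mulrA ea mulrA.
  by rewrite k2 -mulrA eb mulrA.
have [e [he [f1 f2]]] := gen Q1 sa sb sc (And3 q1 q2 q3) hsa hsb hsc.
have [g [hg [g1 g2]]] := gen Q2 ta tb tc (And3 r1 r2 r3) hta htb htc.
rewrite /dist; congr Num.sqrt.
have hD2 : cross n1 n2 ^+ 2 != 0 by rewrite expf_neq0.
apply: (mulfI hD2).
have -> : dist2 H Q1 = dot (psub Q1 H) (psub Q1 H) by rewrite /dist2 /dot /psub /=; ring.
have -> : dist2 H Q2 = dot (psub Q2 H) (psub Q2 H) by rewrite /dist2 /dot /psub /=; ring.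
rewrite !lagrange f1 f2 g1 g2.
move: E3; rewrite -/n1 -/n2 -/d1 -/d2 -/l1 -/l2 => E3.
set F := dot n1 n1; set G := dot n2 n2; set M := dot n1 n2.
have -> : (d1 + x * e * l1) ^+ 2 * G - 2 * (d1 + x * e * l1) * (d2 + x * e * l2) * M +
   (d2 + x * e * l2) ^+ 2 * F =
   d1 ^+ 2 * G - 2 * d1 * d2 * M + d2 ^+ 2 * F
   + 2 * x * e * (d1 * l1 * G - (d1 * l2 + d2 * l1) * M + d2 * l2 * F)
   + x ^+ 2 * e ^+ 2 * (l1 ^+ 2 * G - 2 * l1 * l2 * M + l2 ^+ 2 * F) by ring.
have -> : (d1 + x * g * l1) ^+ 2 * G - 2 * (d1 + x * g * l1) * (d2 + x * g * l2) * M +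
   (d2 + x * g * l2) ^+ 2 * F =
   d1 ^+ 2 * G - 2 * d1 * d2 * M + d2 ^+ 2 * F
   + 2 * x * g * (d1 * l1 * G - (d1 * l2 + d2 * l1) * M + d2 * l2 * F)
   + x ^+ 2 * g ^+ 2 * (l1 ^+ 2 * G - 2 * l1 * l2 * M + l2 ^+ 2 * F) by ring.
rewrite E3 he hg; ring.
Qed.
End S1.
Section S2.
Variable R : rcfType.
Local Notation pt := (point R).

Lemma ray_gen (O D X u : pt) (m x : R) :
  D = padd O (pscale m u) -> dot u u = 1 -> on_ray_at O D x X ->
  exists s : R, s ^+ 2 = 1 /\ X = padd O (pscale (x * s) u).
Proof.
move=> -> hu [[t ht ->] hd].
have eX : padd O (pscale t (psub (padd O (pscale m u)) O)) = padd O (pscale (t * m) u).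
  by rewrite /padd /pscale /psub /=; congr (_, _); ring.
rewrite eX; rewrite eX in hd.
have : dist2 O (padd O (pscale (t * m) u)) = (t * m) ^+ 2.
  rewrite -[RHS]mulr1 -hu /dist2 /dot /psub /padd /pscale /=; ring.
move: hd; rewrite /dist => hd e2; rewrite e2 sqrtr_sqr in hd.
case: (lerP 0 (t * m)) => hy.
  exists 1; split; first by rewrite expr1n.
  by rewrite mulr1 -hd ger0_norm.
exists (-1); split; first by rewrite sqrrN expr1n.
by rewrite -hd ltr0_norm // mulrN1 opprK.
Qed.
End S2.
Section S3.
Variable R : rcfType.
Local Notation pt := (point R).
Local Notation C := (R[i]).
Local Notation "x %:C" := (real_complex R x).

Definition zz (U : pt) : C := Complex U.1 U.2.
Definition zb (U : pt) : C := Complex U.1 (- U.2).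

Lemma rcD (x y : R) : (x + y)%:C = x%:C + y%:C. Proof. exact: rmorphD. Qed.
Lemma rcB (x y : R) : (x - y)%:C = x%:C - y%:C. Proof. exact: rmorphB. Qed.
Lemma rcM (x y : R) : (x * y)%:C = x%:C * y%:C. Proof. exact: rmorphM. Qed.
Lemma rc0 : (0 : R)%:C = 0. Proof. exact: rmorph0. Qed.

Lemma toC3 (x y z : R) : x%:C + y%:C + z%:C = 0 -> x + y + z = 0.
Proof. move/(congr1 (@complex.Re R)) => /= <-. ring. Qed.

Lemma toCE3 (d1 d2 l1 l2 n11 n22 n12 : R) :
  d1%:C * l1%:C * n22%:C - (d1%:C * l2%:C + d2%:C * l1%:C) * n12%:C
   + d2%:C * l2%:C * n11%:C = 0 ->
  d1 * l1 * n22 - (d1 * l2 + d2 * l1) * n12 + d2 * l2 * n11 = 0.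
Proof. move/(congr1 (@complex.Re R)) => /= <-. ring. Qed.

Lemma zmul U V : zz U * zb V = (dot U V)%:C + 'i%C * (cross V U)%:C.
Proof.
case: U => u1 u2; case: V => v1 v2.
rewrite /zz /zb /dot /cross /=.
apply/eqP; rewrite eq_complex /=; apply/andP; split; apply/eqP; ring.
Qed.

Lemma zz_add U V : zz (padd U V) = zz U + zz V.
Proof. by case: U => u1 u2; case: V => v1 v2. Qed.
Lemma zb_add U V : zb (padd U V) = zb U + zb V.
Proof. case: U => u1 u2; case: V => v1 v2; rewrite /zb /=.
apply/eqP; rewrite eq_complex /=; apply/andP; split; apply/eqP => //; ring. Qed.
Lemma zz_sub U V : zz (psub U V) = zz U - zz V.
Proof. by case: U => u1 u2; case: V => v1 v2. Qed.
Lemma zb_sub U V : zb (psub U V) = zb U - zb V.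
Proof. case: U => u1 u2; case: V => v1 v2; rewrite /zb /=.
apply/eqP; rewrite eq_complex /=; apply/andP; split; apply/eqP => //; ring. Qed.
Lemma zz_scale t U : zz (pscale t U) = t%:C * zz U.
Proof. case: U => u1 u2; rewrite /zz /=.
apply/eqP; rewrite eq_complex /=; apply/andP; split; apply/eqP => //; ring. Qed.
Lemma zb_scale t U : zb (pscale t U) = t%:C * zb U.
Proof. case: U => u1 u2; rewrite /zb /=.
apply/eqP; rewrite eq_complex /=; apply/andP; split; apply/eqP => //; ring. Qed.

Lemma dotC U V : (dot U V)%:C = (zz U * zb V + zb U * zz V) / 2.
Proof.
rewrite zmul (mulrC (zb U)) zmul.
have -> : dot V U = dot U V by rewrite /dot; ring.
have -> : cross U V = - cross V U by rewrite /cross; ring.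
rewrite rmorphN /=. by field.
Qed.

Lemma icross U V : 'i%C * (cross V U)%:C = (zz U * zb V - zb U * zz V) / 2.
Proof.
rewrite zmul (mulrC (zb U)) zmul.
have -> : dot V U = dot U V by rewrite /dot; ring.
have -> : cross U V = - cross V U by rewrite /cross; ring.
rewrite rmorphN /=. by field.
Qed.

Lemma zz_unit u : dot u u = 1 -> zz u * zb u = 1.
Proof.
move=> h; rewrite zmul h.
have -> : cross u u = 0 by rewrite /cross; ring.
by rewrite rmorph0 mulr0 addr0 rmorph1.
Qed.

Lemma zz_neq0 u : u != (0, 0) -> zz u != 0.
Proof.
case: u => u1 u2 h; apply/negP => /eqP h0; move/negP: h; apply.
by case: h0 => -> ->.
Qed.

Lemma zb_neq0 u : u != (0, 0) -> zb u != 0.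
Proof.
case: u => u1 u2 h; apply/negP => /eqP h0; move/negP: h; apply.
case: h0 => -> /eqP; rewrite oppr_eq0 => /eqP -> //.
Qed.

Lemma zfoot_dir P U V d lam :
  V = padd U (pscale lam d) -> lam != 0 -> d != (0, 0) ->
  zz (foot P U V) = zz V + (zz P - zz V + zz d / zb d * (zb P - zb V)) / 2.
Proof.
move=> -> hl hd.
have h1 := zz_neq0 hd; have h2 := zb_neq0 hd.
have hl' : lam%:C != 0 by rewrite fmorph_eq0.
rewrite /foot /dist2 zz_add zz_scale fmorph_div /= !dotC.
rewrite !zz_sub !zb_sub !zz_add !zb_add !zz_scale !zb_scale.
field. rewrite h2 /=.
have e : forall a b : C, a + b - a = b by move=> a b; ring.
rewrite !e.
set l := real_complex R lam.
have -> : l * zz d * (l * zb d) + l * zb d * (l * zz d) = 2 * (l ^+ 2 * (zz d * zb d)) by ring.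
by rewrite !mulf_neq0 ?expf_neq0 // pnatr_eq0.
Qed.

Lemma zbfoot_dir P U V d lam :
  V = padd U (pscale lam d) -> lam != 0 -> d != (0, 0) ->
  zb (foot P U V) = zb V + (zb P - zb V + zb d / zz d * (zz P - zz V)) / 2.
Proof.
move=> -> hl hd.
have h1 := zz_neq0 hd; have h2 := zb_neq0 hd.
have hl' : lam%:C != 0 by rewrite fmorph_eq0.
rewrite /foot /dist2 zb_add zb_scale fmorph_div /= !dotC.
rewrite !zz_sub !zb_sub !zz_add !zb_add !zz_scale !zb_scale.
field. rewrite h1 /=.
have e : forall a b : C, a + b - a = b by move=> a b; ring.
rewrite !e.
set l := real_complex R lam.
have -> : l * zz d * (l * zb d) + l * zb d * (l * zz d) = 2 * (l ^+ 2 * (zz d * zb d)) by ring.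
by rewrite !mulf_neq0 ?expf_neq0 // pnatr_eq0.
Qed.

Lemma zb_inv u : dot u u = 1 -> zb u = (zz u)^-1.
Proof.
move=> h; have h1 := zz_unit h.
have hz : zz u != 0 by apply/negP => /eqP h0; move: h1; rewrite h0 mul0r => /eqP; rewrite eq_sym oner_eq0.
by apply: (mulfI hz); rewrite h1 mulfV.
Qed.

Lemma zz_unit_neq0 u : dot u u = 1 -> zz u != 0.
Proof.
move=> h; have h1 := zz_unit h.
by apply/negP => /eqP h0; move: h1; rewrite h0 mul0r => /eqP; rewrite eq_sym oner_eq0.
Qed.

Lemma zfoot_unit P U V u m I :
  V = padd U (pscale m u) -> m != 0 -> dot u u = 1 ->
  zz (foot P U V) = zz I + (zz P - zz I + zz u ^+ 2 * (zb P - zb I)) / 2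
     + 'i%C * (cross u (psub U I))%:C * zz u.
Proof.
move=> -> hm hu.
have hz := zz_unit_neq0 hu.
have hm' : m%:C != 0 by rewrite fmorph_eq0.
rewrite icross /foot /dist2 zz_add zz_scale fmorph_div /= !dotC.
rewrite !zz_sub !zb_sub !zz_add !zb_add !zz_scale !zb_scale (zb_inv hu).
field. rewrite hz /=; set l := real_complex R m.
rewrite (_ : _ * _ + _ * _ = 2 * (l ^+ 2 * zz u)); last by ring.
by rewrite !mulf_neq0 ?expf_neq0 // pnatr_eq0.
Qed.

Lemma zbfoot_unit P U V u m I :
  V = padd U (pscale m u) -> m != 0 -> dot u u = 1 ->
  zb (foot P U V) = zb I + (zb P - zb I + zb u ^+ 2 * (zz P - zz I)) / 2
     - 'i%C * (cross u (psub U I))%:C * zb u.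
Proof.
move=> -> hm hu.
have hz := zz_unit_neq0 hu.
have hm' : m%:C != 0 by rewrite fmorph_eq0.
rewrite icross /foot /dist2 zb_add zb_scale fmorph_div /= !dotC.
rewrite !zz_sub !zb_sub !zz_add !zb_add !zz_scale !zb_scale (zb_inv hu).
field. rewrite hz /=; set l := real_complex R m.
rewrite (_ : _ * _ + _ * _ = 2 * (l ^+ 2 * zz u)); last by ring.
by rewrite !mulf_neq0 ?expf_neq0 // pnatr_eq0.
Qed.
End S3.
Section S5.
Variable R : rcfType.
Local Notation pt := (point R).

Lemma foot_param (P U V u : pt) (m : R) :
  V = padd U (pscale m u) -> m != 0 -> dot u u = 1 ->
  V = padd (foot P U V) (pscale (m - dot (psub P U) u) u) /\
  U = padd (foot P U V) (pscale (- dot (psub P U) u) u).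
Proof.
move=> -> hm hu.
have e : dist2 (padd U (pscale m u)) U = m ^+ 2.
  by rewrite -[RHS]mulr1 -hu /dist2 /dot /padd /pscale /psub /=; ring.
rewrite /foot e; case: U hu e => u1 u2; case: u => v1 v2 hu e.
move: hu; rewrite /dot /padd /pscale /psub /= => hu.
split; congr (_, _); field; by [].
Qed.

Lemma cross_pos (u v : pt) : cross u v != 0 -> 0 < dot v v.
Proof.
move=> h.
have e : dot u u * dot v v = cross u v ^+ 2 + dot u v ^+ 2 by rewrite /dot /cross; ring.
have g : 0 <= dot v v by rewrite /dot -!expr2 addr_ge0 ?sqr_ge0.
rewrite lt_def g andbT; apply/negP => /eqP h0.
move: e; rewrite h0 mulr0 => /esym/eqP; rewrite paddr_eq0 ?sqr_ge0 //.
by case/andP; rewrite sqrf_eq0 (negbTE h).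
Qed.

Lemma cross_zz (u v : pt) : cross u v != 0 -> zz u != zz v.
Proof.
case: u => u1 u2; case: v => v1 v2 h; apply/negP => /eqP [e1 e2].
by move: h; rewrite /cross /= e1 e2 mulrC subrr eqxx.
Qed.

Lemma cross_sub (u v : pt) : cross u v != 0 -> psub v u != (0, 0).
Proof.
case: u => u1 u2; case: v => v1 v2 h; apply/negP => /eqP [e1 e2].
move: h; have -> : cross (u1, u2) (v1, v2) = u1 * (v2 - u2) - u2 * (v1 - u1).
  by rewrite /cross /=; ring.
by rewrite e1 e2 !mulr0 subrr eqxx.
Qed.
End S5.
Section S6.
Variable R : rcfType.
Local Notation pt := (point R).

Lemma unit_of (U V : pt) (a : R) : 0 < a -> a ^+ 2 = dist2 U V ->
  dot (pscale a^-1 (psub V U)) (pscale a^-1 (psub V U)) = 1.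
Proof.
case: U => u1 u2; case: V => v1 v2; rewrite /dist2 /dot /pscale /psub /= => ha e.
have a0 : a != 0 by rewrite gt_eqF.
transitivity (((u1 - v1) * (u1 - v1) + (u2 - v2) * (u2 - v2)) / a ^+ 2).
  by field.
by rewrite -e divff // expf_neq0.
Qed.

Lemma pt_of (U V : pt) (a : R) : a != 0 ->
  V = padd U (pscale a (pscale a^-1 (psub V U))).
Proof.
case: U => u1 u2; case: V => v1 v2 a0; rewrite /padd /pscale /psub /=.
by congr (_, _); field.
Qed.

Lemma inc_A (A B C : pt) (a b c : R) : a + b + c != 0 -> b != 0 -> c != 0 ->
  pscale (a + b + c)^-1 (padd (pscale a A) (padd (pscale b B) (pscale c C))) =
  padd A (pscale (b * c / (a + b + c))
    (psub (pscale c^-1 (psub B A)) (pscale b^-1 (psub A C)))).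
Proof.
case: A => a1 a2; case: B => b1 b2; case: C => c1 c2 hs hb hc.
rewrite /padd /pscale /psub /=; congr (_, _); (field; rewrite ?hs ?ha ?hb ?hc ?andbT //).
Qed.

Lemma inc_B (A B C : pt) (a b c : R) : a + b + c != 0 -> a != 0 -> c != 0 ->
  pscale (a + b + c)^-1 (padd (pscale a A) (padd (pscale b B) (pscale c C))) =
  padd B (pscale (c * a / (a + b + c))
    (psub (pscale a^-1 (psub C B)) (pscale c^-1 (psub B A)))).
Proof.
case: A => a1 a2; case: B => b1 b2; case: C => c1 c2 hs ha hc.
rewrite /padd /pscale /psub /=; congr (_, _); (field; rewrite ?hs ?ha ?hb ?hc ?andbT //).
Qed.

Lemma inc_C (A B C : pt) (a b c : R) : a + b + c != 0 -> a != 0 -> b != 0 ->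
  pscale (a + b + c)^-1 (padd (pscale a A) (padd (pscale b B) (pscale c C))) =
  padd C (pscale (a * b / (a + b + c))
    (psub (pscale b^-1 (psub A C)) (pscale a^-1 (psub C B)))).
Proof.
case: A => a1 a2; case: B => b1 b2; case: C => c1 c2 hs ha hb.
rewrite /padd /pscale /psub /=; congr (_, _); (field; rewrite ?hs ?ha ?hb ?hc ?andbT //).
Qed.

Lemma inc_cross (A B C : pt) (a b c : R) :
  a != 0 -> b != 0 -> c != 0 -> a + b + c != 0 ->
  let I := pscale (a + b + c)^-1 (padd (pscale a A) (padd (pscale b B) (pscale c C))) in
  cross (pscale b^-1 (psub A C)) (psub C I) = cross (pscale a^-1 (psub C B)) (psub B I) /\
  cross (pscale c^-1 (psub B A)) (psub A I) = cross (pscale a^-1 (psub C B)) (psub B I).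
Proof.
case: A => a1 a2; case: B => b1 b2; case: C => c1 c2 ha hb hc hs.
rewrite /cross /padd /pscale /psub /=; split; (field; rewrite ?hs ?ha ?hb ?hc ?andbT //).
Qed.

Lemma cross_scale (u v : pt) p q : cross (pscale p u) (pscale q v) = p * q * cross u v.
Proof. by rewrite /cross /pscale /=; ring. Qed.
End S6.
Unset Implicit Arguments.
Theorem lemma2p3 (R : rcfType) (A B C P : point R) (x : R) :
  ~~ collinear A B C -> 0 < x ->
  let I := incenter A B C in
  let AP := foot P B C in
  let BP := foot P C A in
  let CP := foot P A B in
  let A' := foot P A I in
  let B' := foot P B I in
  let C' := foot P C I in
  ~~ collinear A' B' C' ->
  forall H' : point R, is_orthocenter H' A' B' C' ->
  forall A1 B1 C1 A2 B2 C2 : point R,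
  on_ray_at AP C x A1 -> on_ray_at BP A x B1 -> on_ray_at CP B x C1 ->
  on_ray_at AP B x A2 -> on_ray_at BP C x B2 -> on_ray_at CP A x C2 ->
  forall Q1 Q2 : point R,
  is_orthologic_center A1 B1 C1 A' B' C' Q1 ->
  is_orthologic_center A2 B2 C2 A' B' C' Q2 ->
  dist H' Q1 = dist H' Q2.
Proof.
move=> hcol hx I AP BP CP A' B' C' hcol' H' hH A1 B1 C1 A2 B2 C2
  rA1 rB1 rC1 rA2 rB2 rC2 Q1 Q2 hQ1 hQ2.
have hK : cross (psub B A) (psub C A) != 0 by move: hcol; rewrite /collinear /cross /psub.
have d2a : 0 < dist2 B C.
  apply: (@cross_pos _ (psub B A)).
  have -> : cross (psub B A) (psub B C) = - cross (psub B A) (psub C A)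
    by rewrite /cross /psub /=; ring.
  by rewrite oppr_eq0.
have d2b : 0 < dist2 C A by apply: (@cross_pos _ (psub B A)).
have d2c : 0 < dist2 A B.
  apply: (@cross_pos _ (psub C A)).
  have -> : cross (psub C A) (psub A B) = cross (psub B A) (psub C A)
    by rewrite /cross /psub /=; ring.
  by [].
set a := dist B C. set b := dist C A. set c := dist A B.
have ha : 0 < a by rewrite /a /dist sqrtr_gt0.
have hb : 0 < b by rewrite /b /dist sqrtr_gt0.
have hc : 0 < c by rewrite /c /dist sqrtr_gt0.
have a2 : a ^+ 2 = dist2 B C by rewrite /a /dist sqr_sqrtr // ltW.
have b2 : b ^+ 2 = dist2 C A by rewrite /b /dist sqr_sqrtr // ltW.
have c2 : c ^+ 2 = dist2 A B by rewrite /c /dist sqr_sqrtr // ltW.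
have a0 : a != 0 by rewrite gt_eqF.
have b0 : b != 0 by rewrite gt_eqF.
have c0 : c != 0 by rewrite gt_eqF.
have s0 : a + b + c != 0 by rewrite gt_eqF // !addr_gt0.
set ua := pscale a^-1 (psub C B).
set ub := pscale b^-1 (psub A C).
set uc := pscale c^-1 (psub B A).
have hua : dot ua ua = 1 by apply: unit_of.
have hub : dot ub ub = 1 by apply: unit_of.
have huc : dot uc uc = 1 by apply: unit_of.
have eC : C = padd B (pscale a ua) by apply: pt_of.
have eA : A = padd C (pscale b ub) by apply: pt_of.
have eB : B = padd A (pscale c uc) by apply: pt_of.
have kbc : cross ub uc != 0.
  rewrite cross_scale !mulf_neq0 ?invr_eq0 //.
  have -> : cross (psub A C) (psub B A) = cross (psub B A) (psub C A)
    by rewrite /cross /psub /=; ring.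
  by [].
have kca : cross uc ua != 0.
  rewrite cross_scale !mulf_neq0 ?invr_eq0 //.
  have -> : cross (psub B A) (psub C B) = cross (psub B A) (psub C A)
    by rewrite /cross /psub /=; ring.
  by [].
have kab : cross ua ub != 0.
  rewrite cross_scale !mulf_neq0 ?invr_eq0 //.
  have -> : cross (psub C B) (psub A C) = cross (psub B A) (psub C A)
    by rewrite /cross /psub /=; ring.
  by [].
have eIA : I = padd A (pscale (b * c / (a + b + c)) (psub uc ub)).
  by rewrite /I /incenter /=; apply: inc_A.
have eIB : I = padd B (pscale (c * a / (a + b + c)) (psub ua uc)).
  by rewrite /I /incenter /=; apply: inc_B.
have eIC : I = padd C (pscale (a * b / (a + b + c)) (psub ub ua)).
  by rewrite /I /incenter /=; apply: inc_C.
have [kb kc] : cross ub (psub C I) = cross ua (psub B I) /\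
               cross uc (psub A I) = cross ua (psub B I).
  by rewrite /I /incenter /=; apply: inc_cross.
have lA : b * c / (a + b + c) != 0 by rewrite !mulf_neq0 ?invr_eq0.
have lB : c * a / (a + b + c) != 0 by rewrite !mulf_neq0 ?invr_eq0.
have lC : a * b / (a + b + c) != 0 by rewrite !mulf_neq0 ?invr_eq0.
have hzA' := zfoot_dir P eIA lA (cross_sub kbc).
have hwA' := zbfoot_dir P eIA lA (cross_sub kbc).
have hzB' := zfoot_dir P eIB lB (cross_sub kca).
have hwB' := zbfoot_dir P eIB lB (cross_sub kca).
have hzC' := zfoot_dir P eIC lC (cross_sub kab).
have hwC' := zbfoot_dir P eIC lC (cross_sub kab).
have hzAP := zfoot_unit P I eC a0 hua.
have hwAP := zbfoot_unit P I eC a0 hua.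
have hzBP := zfoot_unit P I eA b0 hub.
have hwBP := zbfoot_unit P I eA b0 hub.
have hzCP := zfoot_unit P I eB c0 huc.
have hwCP := zbfoot_unit P I eB c0 huc.
have nA := zz_unit_neq0 hua.
have nB := zz_unit_neq0 hub.
have nC := zz_unit_neq0 huc.
have nAB := cross_zz kab. have nBC := cross_zz kbc. have nCA := cross_zz kca.
have nBA : zz ub != zz ua by rewrite eq_sym.
have nCB : zz uc != zz ub by rewrite eq_sym.
have nAC : zz ua != zz uc by rewrite eq_sym.
have E1 : dot (psub AP A') (psub B' C') + dot (psub BP B') (psub C' A')
    + dot (psub CP C') (psub A' B') = 0.
  apply: toC3.
  rewrite !dotC !zz_sub !zb_sub.
  rewrite hzA' hwA' hzB' hwB' hzC' hwC' hzAP hwAP hzBP hwBP hzCP hwCP.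
  rewrite !zz_sub !zb_sub (zb_inv hua) (zb_inv hub) (zb_inv huc) kb kc.
  field.
  by rewrite ?mulN1r ?subr_eq0 ?nA ?nB ?nC ?nAB ?nBC ?nCA ?nBA ?nCB ?nAC.
have E2 : dot ua (psub B' C') + dot ub (psub C' A') + dot uc (psub A' B') = 0.
  apply: toC3.
  rewrite !dotC !zz_sub !zb_sub.
  rewrite hzA' hwA' hzB' hwB' hzC' hwC'.
  rewrite !zz_sub !zb_sub (zb_inv hua) (zb_inv hub) (zb_inv huc).
  field.
  by rewrite ?mulN1r ?subr_eq0 ?nA ?nB ?nC ?nAB ?nBC ?nCA ?nBA ?nCB ?nAC.
have E3 : dot (psub AP A') (psub B' C') * dot ua (psub B' C') * dot (psub C' A') (psub C' A')
  - (dot (psub AP A') (psub B' C') * dot ub (psub C' A')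
     + dot (psub BP B') (psub C' A') * dot ua (psub B' C')) * dot (psub B' C') (psub C' A')
  + dot (psub BP B') (psub C' A') * dot ub (psub C' A') * dot (psub B' C') (psub B' C') = 0.
  apply: toCE3.
  rewrite !dotC !zz_sub !zb_sub.
  rewrite hzA' hwA' hzB' hwB' hzC' hwC' hzAP hwAP hzBP hwBP.
  rewrite !zz_sub !zb_sub (zb_inv hua) (zb_inv hub) (zb_inv huc) kb.
  field.
  by rewrite ?mulN1r ?subr_eq0 ?nA ?nB ?nC ?nAB ?nBC ?nCA ?nBA ?nCB ?nAC.
have [fa1 fa2] := foot_param P eC a0 hua.
have [fb1 fb2] := foot_param P eA b0 hub.
have [fc1 fc2] := foot_param P eB c0 huc.
have [sa1 [sa1e eA1]] := ray_gen fa1 hua rA1.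
have [sa2 [sa2e eA2]] := ray_gen fa2 hua rA2.
have [sb1 [sb1e eB1]] := ray_gen fb1 hub rB1.
have [sb2 [sb2e eB2]] := ray_gen fb2 hub rB2.
have [sc1 [sc1e eC1]] := ray_gen fc1 huc rC1.
have [sc2 [sc2e eC2]] := ray_gen fc2 huc rC2.
have hD : cross (psub B' C') (psub C' A') != 0.
  move: hcol'; rewrite /collinear.
  have -> : cross (psub B' C') (psub C' A') =
    (B'.1 - A'.1) * (C'.2 - A'.2) - (B'.2 - A'.2) * (C'.1 - A'.1)
    by rewrite /cross /psub /=; ring.
  by [].
rewrite eA1 eB1 eC1 in hQ1; rewrite eA2 eB2 eC2 in hQ2.
exact: (final_gen hD hx sa1e sb1e sc1e sa2e sb2e sc2e hH hQ1 hQ2 E1 E2 E3).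
Qed.
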